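(* Let $\Phi$ be a $k$-CNF on $x_1,\dots,x_n$ with a mist $\mathcal M$, let $\omega=\lceil\exp(n/k^2)\rceil$, and consider the run $\sigma^{[0]},\sigma^{[1]},\dots$ of Walksat$(\Phi,\omega)$. Let $\mathcal A$ be the event $\sigma^{[0]}\notin\mathcal D(\Phi,\mathcal M)$ and let $\mathcal H=\bigcup_{\mu\in\mathcal M,\,0\le t_1<t_2\le\omega}H_\mu(t_1,t_2)$. Then $$\Pr\big[\exists t\le\omega:\sigma^{[t]}\in S(\Phi)\,\big|\,\mathcal A\big]\le\Pr[\mathcal H\mid\mathcal A].$$
   Context: $\Phi$ has $m$ clauses; $\rho=2^{-k}m/n$, $\kappa=\ln k/k$. $U_\Phi(\sigma)$ is the set of indices of clauses unsatisfied by $\sigma$, $\mathcal U_\Phi(\sigma)=|U_\Phi(\sigma)|$, $T(\Phi)=\{\tau\in\{0,1\}^n:\mathcal U_\Phi(\tau)\le n\rho/10\}$, and $S(\Phi)\subseteq T(\Phi)$ is the set of satisfying assignments. $\mathrm{dist}$ is Hamming distance; $\mathcal D_\sigma(r_1,r_2)=\{\tau:\lfloor r_1\kappa n\rfloor\le\mathrm{dist}(\sigma,\tau)\le\lfloor r_2\kappa n\rfloor\}$. A mist is a set $\mathcal M\subseteq T(\Phi)$ whose distinct elements have pairwise distance at least $2\kappa n$ and such that every $\sigma\in T(\Phi)$ is within distance $2\kappa n$ of some $\mu\in\mathcal M$. $\mathcal D(\Phi,\mathcal M)=\bigcup_{\sigma\in\mathcal M}\mathcal D_\sigma(0,10)$.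 Walksat$(\Phi,\omega)$: $\sigma^{[0]}$ uniform in $\{0,1\}^n$; at step $i=0,\dots,\omega$, if $\sigma^{[i]}$ is satisfying the algorithm halts, otherwise it picks a uniformly random unsatisfied clause and a uniformly random position $j\in[k]$ in it and flips that literal's variable to obtain $\sigma^{[i+1]}$. For $\mu\in\mathcal M$ and $t_1<t_2$, $H_\mu(t_1,t_2)$ is the event that $\mathrm{dist}(\sigma^{[t_1]},\mu)=\lfloor10\kappa n\rfloor$, $\mathrm{dist}(\sigma^{[t_2]},\mu)=\lfloor5\kappa n\rfloor$, and $\sigma^{[t]}\in\mathcal D_\mu(5,10)\setminus T(\Phi)$ for all $t_1\le t\le t_2$.
   Formalization: The inequality holds only for k ≥ k₀ and n ≥ n₀, where k₀ is some fixed threshold and n₀ is some threshold depending on k. The paper assumes this as well. *)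

(* Defs.v *)
From Stdlib Require Import Reals.
From HB Require Import structures.
From mathcomp Require Import all_boot all_order all_algebra.
Set Implicit Arguments. Unset Strict Implicit. Unset Printing Implicit Defensive.
Import Order.TTheory GRing.Theory Num.Theory.

Definition floorN (x : R) : nat := Z.to_nat (Int_part x).          (* floor, clipped at 0 *)
Definition ceilN (x : R) : nat := Z.to_nat (- Int_part (- x)).     (* ceiling, clipped at 0 *)
Definition Rleb (x y : R) : bool := if Rle_dec x y then true else false.

Definition kappa (k : nat) : R := Rdiv (ln (INR k)) (INR k).
Definition rho (n m k : nat) : R := Rdiv (Rmult (Rinv (pow 2 k)) (INR m)) (INR n).
Definition omega (n k : nat) : nat := ceilN (exp (Rdiv (INR n) (INR (k ^ 2)))).

(* A literal on x_1..x_n: (variable, sign); sign true = positive literal x_v. *)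
Definition literal (n : nat) := ('I_n * bool)%type.
Definition clause (n k : nat) := (k.-tuple (literal n))%type.
Definition kcnf (n k m : nat) := (m.-tuple (clause n k))%type.
Definition assignment (n : nat) := {ffun 'I_n -> bool}.

Definition lit_sat n (s : assignment n) (l : literal n) : bool := s l.1 == l.2.
Definition clause_sat n k (s : assignment n) (c : clause n k) : bool :=
  [exists j : 'I_k, lit_sat s (tnth c j)].

Definition Uset n k m (Phi : kcnf n k m) (s : assignment n) : {set 'I_m} :=
  [set i : 'I_m | ~~ clause_sat s (tnth Phi i)].

Definition Tset n k m (Phi : kcnf n k m) : {set assignment n} :=
  [set t : assignment n |
     Rleb (INR #|Uset Phi t|) (Rdiv (Rmult (INR n) (rho n m k)) 10)].
Definition Sset n k m (Phi : kcnf n k m) : {set assignment n} :=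
  [set t : assignment n | Uset Phi t == set0].

Definition dist n (s t : assignment n) : nat := #|[set i : 'I_n | s i != t i]|.

Definition Dball n k (s : assignment n) (r1 r2 : nat) : {set assignment n} :=
  [set t : assignment n |
     (floorN (Rmult (INR r1) (Rmult (kappa k) (INR n))) <= dist s t)%N &&
     (dist s t <= floorN (Rmult (INR r2) (Rmult (kappa k) (INR n))))%N].

Definition is_mist n k m (Phi : kcnf n k m) (M : {set assignment n}) : Prop :=
  [/\ M \subset Tset Phi,
      (forall mu mu', mu \in M -> mu' \in M -> mu <> mu' ->
         Rle (Rmult 2 (Rmult (kappa k) (INR n))) (INR (dist mu mu'))) &
      (forall s, s \in Tset Phi -> exists2 mu, mu \in M &
         Rle (INR (dist s mu)) (Rmult 2 (Rmult (kappa k) (INR n))))].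

Definition Dunion n k (M : {set assignment n}) : {set assignment n} :=
  \bigcup_(mu in M) Dball k mu 0 10.

Definition flip n (s : assignment n) (v : 'I_n) : assignment n :=
  [ffun i => if i == v then ~~ s i else s i].

Local Open Scope ring_scope.

(* One-step transition probability sigma -> tau. If sigma is satisfying the
   algorithm has halted; we keep the state frozen (probability 1 of staying). *)
Definition step_prob n k m (Phi : kcnf n k m) (s t : assignment n) : rat :=
  if Uset Phi s == set0 then (t == s)%:R
  else (\sum_(i in Uset Phi s) \sum_(j < k)
          ((flip s (tnth (tnth Phi i) j).1 == t)%:R : rat))
       / ((#|Uset Phi s| * k)%N)%:R.

Definition traj (n w : nat) := {ffun 'I_w.+1 -> assignment n}.

Definition traj_weight n k m (Phi : kcnf n k m) w (tr : traj n w) : rat :=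
  (2 ^+ n)^-1 * \prod_(i < w) step_prob Phi (tr (inord i)) (tr (inord i.+1)).

Definition Pr n k m (Phi : kcnf n k m) w (E : pred (traj n w)) : rat :=
  \sum_(tr : traj n w | E tr) traj_weight Phi tr.

(* Conditional probability Pr[E | F] (taken to be 0 if Pr[F] = 0). *)
Definition Prc n k m (Phi : kcnf n k m) w (E F : pred (traj n w)) : rat :=
  Pr Phi (fun tr => E tr && F tr) / Pr Phi F.

Definition EvA n k w (M : {set assignment n}) : pred (traj n w) :=
  fun tr => tr ord0 \notin Dunion k M.

Definition EvSat n k m (Phi : kcnf n k m) w : pred (traj n w) :=
  fun tr => [exists t : 'I_w.+1, tr t \in Sset Phi].

Definition EvHmu n k m (Phi : kcnf n k m) w (mu : assignment n) (t1 t2 : 'I_w.+1)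
  : pred (traj n w) :=
  fun tr =>
    [&& (t1 < t2)%N,
        dist (tr t1) mu == floorN (Rmult 10 (Rmult (kappa k) (INR n))),
        dist (tr t2) mu == floorN (Rmult 5 (Rmult (kappa k) (INR n))) &
        [forall t : 'I_w.+1, ((t1 <= t) && (t <= t2))%N ==>
            (tr t \in Dball k mu 5 10 :\: Tset Phi)]].

Definition EvH n k m (Phi : kcnf n k m) w (M : {set assignment n}) : pred (traj n w) :=
  fun tr => [exists mu in M, exists t1 : 'I_w.+1, exists t2 : 'I_w.+1,
               EvHmu Phi mu t1 t2 tr].

(* Main.v *)
Require Import Defs.
From Stdlib Require Import Reals.
From Stdlib Require Import ZArith Lra Lia.
From HB Require Import structures.
From mathcomp Require Import all_boot all_order all_algebra.
From mathcomp Require Import zify.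
Module RealFacts.
Local Open Scope R_scope.
Lemma floorN_bounds (y : R) : (0 <= y) ->
  (INR (floorN y) <= y) /\ (y - 1 < INR (floorN y)).
Proof.
move=> hy; rewrite /floorN; have [h1 h2] := base_Int_part y.
have hz : Z.le 0 (Int_part y).
  have : (-1 < IZR (Int_part y)) by lra.
  move=> h; have : Z.lt (-1) (Int_part y) by apply: lt_IZR. lia.
rewrite INR_IZR_INZ Z2Nat.id //; lra.
Qed.


Lemma floorN_zero (x : R) : floorN (Rmult (INR 0) x) = 0%N.
Proof.
rewrite /= Rmult_0_l /floorN; have [h1 h2] := base_Int_part 0.
have : Z.le (Int_part 0) 0 by apply: le_IZR.
by case: (Int_part 0).
Qed.

Lemma x_ge1 (k n : nat) : (4 <= k)%N -> (k <= n)%N ->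
  (1 <= Rmult (kappa k) (INR n)).
Proof.
move=> /leP hk /leP hn.
have hK : 4 <= INR k by have := le_INR _ _ hk; rewrite (INR_IZR_INZ 4).
have hN : (INR k <= INR n) by apply: le_INR.
have hL : (1 <= ln (INR k)).
  rewrite -(ln_exp 1); left; apply: ln_increasing; [apply: exp_pos|].
  have := exp_le_3; lra.
rewrite /kappa /Rdiv.
have hi : (INR k * / INR k = 1) by field; lra.
have hi0 : (0 < / INR k) by apply: Rinv_0_lt_compat; lra.
have h1 : 1 <= INR n * / INR k by rewrite -hi; apply: Rmult_le_compat_r; lra.
have h2 : INR n * / INR k <= ln (INR k) * (INR n * / INR k).
  rewrite -{1}(Rmult_1_l (INR n * / INR k)); apply: Rmult_le_compat_r; lra.
rewrite Rmult_assoc (Rmult_comm (/ INR k)); lra.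
Qed.

Lemma ab_facts (x : R) : 1 <= x ->
  (floorN (5 * x) < floorN (10 * x))%N /\
  (forall d : nat, INR d <= 2 * x -> (d < floorN (5 * x))%N).
Proof.
move=> hx.
have [a1 a2] := floorN_bounds (10 * x) ltac:(lra).
have [b1 b2] := floorN_bounds (5 * x) ltac:(lra).
split.
  apply/ltP; apply: INR_lt; lra.
move=> d hd; apply/ltP; apply: INR_lt; lra.
Qed.

Lemma INR5 : INR 5 = 5. Proof. by rewrite INR_IZR_INZ. Qed.
Lemma INR10 : INR 10 = 10. Proof. by rewrite INR_IZR_INZ. Qed.
Lemma rho_pos n m k : INR 0 <= Rdiv (Rmult (INR n) (rho n m k)) 10.
Proof.
rewrite /= /rho /Rdiv.
apply: Rmult_le_pos; last by left; apply: Rinv_0_lt_compat; lra.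
apply: Rmult_le_pos; first exact: pos_INR.
apply: Rmult_le_pos; last first.
  case: (Nat.eq_dec n 0) => [->|hn]; first by rewrite /= Rinv_0; lra.
  left; apply: Rinv_0_lt_compat; apply: lt_0_INR; lia.
apply: Rmult_le_pos; last exact: pos_INR.
left; apply: Rinv_0_lt_compat; apply: pow_lt; lra.
Qed.
Definition aa n k := floorN (Rmult 10 (Rmult (kappa k) (INR n))).
Definition bb n k := floorN (Rmult 5 (Rmult (kappa k) (INR n))).
End RealFacts.
Import RealFacts.
Import Order.TTheory GRing.Theory Num.Theory.
Local Open Scope ring_scope.


Set Implicit Arguments. Unset Strict Implicit.
Local Open Scope ring_scope.

Lemma distC n (s t : assignment n) : Defs.dist s t = Defs.dist t s.
Proof. by rewrite /Defs.dist; apply: eq_card => i; rewrite !inE eq_sym. Qed.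

Lemma dist_flip n (u s : assignment n) v : (Defs.dist u (flip s v) <= (Defs.dist u s).+1)%N.
Proof.
rewrite /Defs.dist -add1n.
apply: leq_trans (_ : #|v |: [set i | u i != s i]| <= _)%N.
  apply: subset_leq_card; apply/subsetP => i; rewrite !inE /flip ffunE.
  by case: (i =P v) => [->|_]; rewrite ?eqxx.
  idtac.
by rewrite cardsU1 leq_add2r leq_b1.
Qed.

Lemma flipK n (s : assignment n) v : flip (flip s v) v = s.
Proof. by apply/ffunP => i; rewrite /flip !ffunE; case: eqP => // ->; rewrite negbK. Qed.

Lemma step_cases n k m (Phi : kcnf n k m) s t : step_prob Phi s t != 0 ->
  t = s \/ exists v, t = flip s v.
Proof.
rewrite /step_prob; case: ifP => _.
  by move=> H; left; apply/eqP; move: H; case: (t == s); rewrite ?eqxx.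
move=> H; right.
case: (boolP [exists i : 'I_m, exists j : 'I_k, flip s (tnth (tnth Phi i) j).1 == t]).
  by case/existsP => i /existsP [j /eqP <-]; eexists.
move=> hn; move: H; rewrite big1 ?mul0r ?eqxx // => i _; apply: big1 => j _.
case: eqP => // e; case/negP: hn; apply/existsP; exists i; apply/existsP; exists j; exact/eqP.
Qed.

Lemma dist_step n k m (Phi : kcnf n k m) u s t : step_prob Phi s t != 0 ->
  (Defs.dist u t <= (Defs.dist u s).+1)%N /\ (Defs.dist u s <= (Defs.dist u t).+1)%N.
Proof.
case/step_cases => [->|[v ->]]; first by rewrite !leqnSn.
by split; [exact: dist_flip| rewrite -{1}(flipK s v); exact: dist_flip].
Qed.

Lemma step_ge0 n k m (Phi : kcnf n k m) s t : 0 <= step_prob Phi s t.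
Proof.
rewrite /step_prob; case: ifP => _; first exact: ler0n.
apply: divr_ge0; last exact: ler0n.
by apply: sumr_ge0 => i _; apply: sumr_ge0 => j _; exact: ler0n.
Qed.

Lemma weight_ge0 n k m (Phi : kcnf n k m) w (tr : traj n w) : 0 <= traj_weight Phi tr.
Proof.
rewrite /traj_weight; apply: mulr_ge0; first by rewrite invr_ge0 exprn_ge0.
by apply: prodr_ge0 => i _; exact: step_ge0.
Qed.

Lemma weight_steps n k m (Phi : kcnf n k m) w (tr : traj n w) :
  traj_weight Phi tr != 0 -> forall t, (t < w)%N ->
  step_prob Phi (tr (inord t)) (tr (inord t.+1)) != 0.
Proof.
rewrite /traj_weight mulf_eq0 negb_or => /andP[_ /prodf_neq0 H] t ht.
by have := H (Ordinal ht) isT.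
Qed.
Local Open Scope nat_scope.
Lemma walk_lemma (f : nat -> nat) (a b N : nat) : b < a -> a < f 0 -> f N < b ->
  (forall t, t < N -> f t.+1 <= (f t).+1 /\ f t <= (f t.+1).+1) ->
  exists t1 t2, [/\ t1 < t2, t2 < N, f t1 = a, f t2 = b &
     forall t, t1 <= t <= t2 -> b <= f t <= a].
Proof.
move=> hba ha0 hN hst.
have ex2 : exists t, f t <= b by exists N; lia.
case: (ex_minnP ex2) => t2 hft2 hmin.
have t2N : t2 <= N by apply: hmin; lia.
case: t2 hft2 hmin t2N => [|s] hft2 hmin t2N; first lia.
have hs : b < f s by case: (leqP (f s) b) => // h; have := hmin s h; lia.
have [_ hs2] := hst s t2N.
have e2 : f s.+1 = b by lia.
have t2N' : s.+1 < N by case: (ltngtP s.+1 N) t2N => //; move=> e; rewrite -e in hN; lia.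
have ex1 : exists t, (t <= s.+1) && (a <= f t) by exists 0; apply/andP; lia.
have ub : forall t, (t <= s.+1) && (a <= f t) -> t <= s.+1 by move=> t /andP[].
case: (ex_maxnP ex1 ub) => t1 /andP[t1le hat1] hmax.
have t1lt : t1 < s.+1 by case: (ltngtP t1 s.+1) t1le => // e; rewrite e in hat1; lia.
have hnext : f t1.+1 < a.
  case: (leqP a (f t1.+1)) => // h; have := hmax t1.+1; rewrite h t1lt /=; lia.
have [_ hst1] := hst t1 ltac:(lia).
exists t1, s.+1; split => //; first lia.
move=> t /andP[h1 h2].
apply/andP; split.
  case: (ltnP t s.+1) => ht.
    case: (boolP (f t <= b)) => hb; first (have := hmin t hb; lia). lia.
  have -> : t = s.+1 by lia.
  lia.
case: (ltnP t1 t) => ht.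
  case: (boolP (a <= f t)) => ha; first (have := hmax t; rewrite ha h2 /=; lia). lia.
have -> : t = t1 by lia.
lia.
Qed.
Local Open Scope ring_scope.

Lemma S_in_T n k m (Phi : kcnf n k m) s : s \in Sset Phi -> s \in Tset Phi.
Proof.
rewrite !inE => /eqP ->; rewrite cards0 /Rleb; case: Rle_dec => // hn; exfalso; apply: hn.
exact: rho_pos.
Qed.

Lemma key n k m (Phi : kcnf n k m) w (M : {set assignment n}) (a b : nat) (tr : traj n w) :
  (b < a)%N ->
  a = aa n k ->
  b = bb n k ->
  (forall mu t : assignment n, (t \in Dball k mu 5 10) = (b <= Defs.dist mu t <= a)%N) ->
  (forall s : assignment n, s \in Tset Phi -> exists2 mu, mu \in M & (Defs.dist s mu < b)%N) ->
  (forall mu : assignment n, mu \in M -> forall s, s \notin Dunion k M -> (a < Defs.dist mu s)%N) ->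
  traj_weight Phi tr != 0 -> EvSat Phi tr -> EvA k M tr -> EvH Phi M tr.
Proof.
move=> hba ha hb hD hT hA hw /existsP[t0 ht0] hA0.
pose F := fun t => tr (inord t).
have hst := weight_steps hw.
have exT : exists t, (t <= w)%N && (F t \in Tset Phi).
  exists t0; rewrite /F inord_val -ltnS ltn_ord /=; exact: S_in_T.
case: (ex_minnP exT) => tau /andP[htw hTt] hmin.
have [mu hmu hdist] := hT _ hTt.
have hF0 : F 0%N = tr ord0 by rewrite /F; congr (tr _); apply/val_inj; rewrite /= inordK.
have ha0 := hA mu hmu _ hA0.
have [t1 [t2 [h12 h2t e1 e2 hbd]]] :=
  @walk_lemma (fun t => Defs.dist mu (F t)) a b tau hba
     ltac:(by rewrite /= hF0) ltac:(by rewrite /= distC)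
     ltac:(move=> t ht; apply: dist_step; apply: hst; lia).
apply/existsP; exists mu; rewrite hmu /=.
apply/existsP; exists (inord t1); apply/existsP; exists (inord t2).
have ht1 : (t1 < w.+1)%N by lia.
have ht2 : (t2 < w.+1)%N by lia.
rewrite /EvHmu !inordK //.
apply/and4P; split => //.
- by rewrite distC -/(F t1) e1 ha.
- by rewrite distC -/(F t2) e2 hb.
apply/forallP => t; apply/implyP => /andP[l1 l2].
have -> : tr t = F t by rewrite /F inord_val.
rewrite inE hD hbd ?l1 ?l2 // andbT.
apply/negP => hin; have := hmin t; rewrite hin andbT.
have -> : (t <= w)%N by rewrite -ltnS ltn_ord.
move=> /(_ isT); lia.
Qed.

Theorem mainTheorem5 :
  exists k0 : nat, forall k : nat, (k0 <= k)%N ->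
  exists n0 : nat, forall n : nat, (n0 <= n)%N ->
  forall (m : nat) (Phi : kcnf n k m) (M : {set assignment n}),
    is_mist Phi M ->
    Prc Phi (EvSat Phi (w := omega n k)) (EvA k (w := omega n k) M)
      <= Prc Phi (EvH Phi (w := omega n k) M) (EvA k (w := omega n k) M).
Proof.
exists 4%N => k hk; exists k => n hn m Phi M [hMT hsep hcov].
have hx := x_ge1 _ _ hk hn.
have [hba hd] := ab_facts _ hx.
have hD : forall mu t : assignment n, (t \in Dball k mu 5 10) =
    (bb n k <= Defs.dist mu t <=
     aa n k)%N.
  by move=> mu t; rewrite inE INR5 INR10.
have hT : forall s : assignment n, s \in Tset Phi -> exists2 mu, mu \in M &
    (Defs.dist s mu < bb n k)%N.
  move=> s hs; have [mu hmu hle] := hcov s hs; exists mu => //; exact: hd.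
have hA : forall mu : assignment n, mu \in M -> forall s, s \notin Dunion k M ->
    (aa n k < Defs.dist mu s)%N.
  move=> mu hmu s hs; rewrite ltnNge; apply/negP => hle; case/negP: hs.
  rewrite /Dunion; apply/bigcupP; exists mu => //.
  by rewrite inE floorN_zero INR10 hle.
rewrite /Prc; apply: ler_wpM2r.
  by rewrite invr_ge0 /Pr; apply: sumr_ge0 => tr _; exact: weight_ge0.
rewrite /Pr [X in X <= _]big_mkcond [X in _ <= X]big_mkcond /=.
apply: ler_sum => tr _.
case hS: (EvSat Phi tr && EvA k M tr); last by case: ifP => _; rewrite ?weight_ge0.
case: (eqVneq (traj_weight Phi tr) 0) => [->|hw]; first by case: ifP.
move/andP: hS => [hs ha]; rewrite (key hba erefl erefl hD hT hA hw hs ha) ha.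
by [].
Qed.
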